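(* There is an isometric embedding of the partition space $(\mathcal{P}_{\ell,m},\delta_2)$ into the graph edit kernel space $(\mathcal{G}_{\ell,m},\delta_g)$, i.e. an injective map $f:\mathcal{P}_{\ell,m}\to\mathcal{G}_{\ell,m}$ with $\delta_g(f(X),f(Y))=\delta_2(X,Y)$ for all $X,Y\in\mathcal{P}_{\ell,m}$.
   Context: Fix $1\le\ell\le m$. $\mathcal{X} = \{\mathbf{X}\in[0,1]^{\ell\times m} : \mathbf{X}^T\mathbf{1}_\ell = \mathbf{1}_m\}$; $\Pi$ is the group of $\ell\times\ell$ permutation matrices; $\mathcal{P}_{\ell,m}$ is the set of orbits $\{\mathbf{P}\mathbf{X}:\mathbf{P}\in\Pi\}$ with metric $\delta_2(X,Y)=\min\{\|\mathbf{X}-\mathbf{Y}\|_2:\mathbf{X}\in X,\mathbf{Y}\in Y\}$ (Frobenius norm). An attributed graph of order $\ell$ with attributes in $\mathbb{R}^m$ is a triple $(\mathcal{V},\mathcal{E},\alpha)$ with $|\mathcal{V}|=\ell$, $\mathcal{E}\subseteq\mathcal{V}\times\mathcal{V}$, and $\alpha:\mathcal{V}\times\mathcal{V}\to\mathbb{R}^m$ such that for $i\ne j$, $\alpha(i,j)\ne\mathbf{0}$ iff $(i,j)\in\mathcal{E}$ (node attributes $\alpha(i,i)$ are arbitrary); $\mathcal{G}_{\ell,m}$ is the set of such graphs. With $\mathcal{V}=\{1,\dots,\ell\}$, a graph $G$ is represented by the $\ell\times\ell$ matrix $\mathbf{G}=(\mathbf{g}_{ij})$ with entries $\mathbf{g}_{ij}=\alpha(i,j)\in\mathbb{R}^m$,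 and graphs differing by relabeling of nodes are identified. The graph edit kernel metric is $\delta_g(G,H)=\min_{\mathbf{P}\in\Pi}\|\mathbf{G}-\mathbf{P}\mathbf{H}\mathbf{P}^T\|_2$, where for such block matrices $\|\mathbf{A}\|_2=\big(\sum_{i,j}\|\mathbf{a}_{ij}\|^2\big)^{1/2}$ and $\mathbf{P}\mathbf{H}\mathbf{P}^T$ permutes rows and columns of $\mathbf{H}$ simultaneously. *)

(* Defs.v *)
From HB Require Import structures.
From mathcomp Require Import all_boot all_order all_algebra all_fingroup.
From mathcomp Require Import boolp classical_sets reals.
Set Implicit Arguments. Unset Strict Implicit. Unset Printing Implicit Defensive.
Import Order.TTheory GRing.Theory Num.Theory.
Local Open Scope ring_scope.
Local Open Scope classical_set_scope.

Section Defs.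
Variables (R : realType) (l m : nat).

Definition is_partmx (X : 'M[R]_(l, m)) : Prop :=
  (forall i j, 0 <= X i j <= 1) /\ (forall j, \sum_(i < l) X i j = 1).

Definition frob (X : 'M[R]_(l, m)) : R :=
  Num.sqrt (\sum_(i < l) \sum_(j < m) (X i j) ^+ 2).

(* orbit {P X : P in Pi}; P X for a permutation matrix P is a row permutation *)
Definition part_orbit (X : 'M[R]_(l, m)) : set 'M[R]_(l, m) :=
  [set Y | exists s : 'S_l, Y = row_perm s X].

Definition PartSpace : Type :=
  {S : set 'M[R]_(l, m) | exists X, is_partmx X /\ S = part_orbit X}.

(* delta_2(X,Y) = min { ||X - Y||_2 : X in X, Y in Y } (a finite nonempty set) *)
Definition delta2 (S T : PartSpace) : R :=
  inf [set frob (X - Y) | X in proj1_sig S & Y in proj1_sig T].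

(* attributed graph on V = {1..l}: edge set E and attribute matrix
   (alpha(i,j))_{ij} with alpha(i,j) in R^m (row vectors) *)
Definition attr_graph : Type := ({set 'I_l * 'I_l} * 'M['rV[R]_m]_l)%type.

Definition wf_graph (G : attr_graph) : Prop :=
  forall i j : 'I_l, i != j -> (G.2 i j != 0) = ((i, j) \in G.1).

(* relabeling of nodes by a permutation s: corresponds to P G P^T *)
Definition relabel (s : 'S_l) (G : attr_graph) : attr_graph :=
  ([set p | (s p.1, s p.2) \in G.1]%SET, \matrix_(i, j) G.2 (s i) (s j)).

Definition permG (s : 'S_l) (A : 'M['rV[R]_m]_l) : 'M['rV[R]_m]_l :=
  \matrix_(i, j) A (s i) (s j).

Definition block_norm (A : 'M['rV[R]_m]_l) : R :=
  Num.sqrt (\sum_(i < l) \sum_(j < l) \sum_(k < m) (A i j 0 k) ^+ 2).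

Definition graph_orbit (G : attr_graph) : set attr_graph :=
  [set H | exists s : 'S_l, H = relabel s G].

Definition GraphSpace : Type :=
  {S : set attr_graph | exists G, wf_graph G /\ S = graph_orbit G}.

(* delta_g(G,H) = min_{P in Pi} ||G - P H P^T||_2, evaluated on representatives
   (the value does not depend on the chosen representatives) *)
Definition delta_g (S T : GraphSpace) : R :=
  inf [set r | exists (G H : attr_graph) (s : 'S_l),
          proj1_sig S G /\ proj1_sig T H /\ r = block_norm (G.2 - permG s H.2)].

End Defs.

(* Main.v *)
Require Import Defs.
From HB Require Import structures.
From mathcomp Require Import all_boot all_order all_algebra all_fingroup.
From mathcomp Require Import boolp classical_sets reals.
Set Implicit Arguments. Unset Strict Implicit. Unset Printing Implicit Defensive.
Import Order.TTheory GRing.Theory Num.Theory.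
Local Open Scope ring_scope.
Local Open Scope classical_set_scope.

Section Emb.
Variables (R : realType) (l m : nat).

Definition Dg (X : 'M[R]_(l, m)) : 'M['rV[R]_m]_l :=
  \matrix_(i, j) (if i == j then row i X else 0).

Definition gr (X : 'M[R]_(l, m)) : attr_graph R l m := (finset.set0, Dg X).

Lemma Dg_inj : injective Dg.
Proof.
move=> X Y /matrixP H; apply/matrixP=> i j.
have := H i i; rewrite !mxE eqxx => /rowP /(_ j); by rewrite !mxE.
Qed.

Lemma permG_Dg s X : permG s (Dg X) = Dg (row_perm s X).
Proof.
apply/matrixP=> i j; rewrite !mxE (inj_eq perm_inj).
case: eqP => // ->; apply/rowP=> k; by rewrite !mxE.
Qed.

Lemma relabel_gr s X : relabel s (gr X) = gr (row_perm s X).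
Proof.
rewrite /relabel /gr /=; congr pair; last exact: permG_Dg.
by apply/setP=> p; rewrite !inE.
Qed.

Lemma block_norm_Dg X Y : block_norm (Dg X - Dg Y) = frob (X - Y).
Proof.
rewrite /block_norm /frob; congr Num.sqrt; apply: eq_bigr => i _.
rewrite (bigD1 i) //= [X in _ + X]big1 ?addr0.
  apply: eq_bigr => k _; rewrite !mxE eqxx !mxE //.
move=> j /negbTE nij; apply: big1 => k _.
by rewrite !mxE eq_sym nij !mxE subrr expr0n.
Qed.

Lemma row_permM s t (X : 'M[R]_(l, m)) :
  row_perm s (row_perm t X) = row_perm (s * t)%g X.
Proof. by apply/matrixP=> i j; rewrite !mxE permM. Qed.

Definition fset (S : PartSpace R l m) : set (attr_graph R l m) :=
  [set G | exists X, proj1_sig S X /\ G = gr X].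

Lemma fset_ok S : exists G, wf_graph G /\ fset S = graph_orbit G.
Proof.
case: S => S [X0 [hX0 eS]]; exists (gr X0); split.
  by move=> i j nij; rewrite /gr /= !mxE (negbTE nij) eqxx inE.
rewrite /fset /= eS; apply/seteqP; split.
  move=> G [X [[s ->] ->]]; exists s; by rewrite relabel_gr.
move=> G [s ->]; exists (row_perm s X0); split; first by exists s.
by rewrite relabel_gr.
Qed.

Definition femb (S : PartSpace R l m) : GraphSpace R l m :=
  exist _ (fset S) (fset_ok S).

Lemma femb_inj : injective femb.
Proof.
move=> [S hS] [T hT] /(congr1 (@proj1_sig _ _)) /= E.
have ST : S = T.
  apply/seteqP; split => X hX.
  - have : fset (exist _ S hS) (gr X) by exists X.
    rewrite E => -[Y [hY]] /(congr1 snd) /= /Dg_inj ->; exact hY.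
  - have : fset (exist _ T hT) (gr X) by exists X.
    rewrite -E => -[Y [hY]] /(congr1 snd) /= /Dg_inj ->; exact hY.
subst T; congr exist; exact: Prop_irrelevance.
Qed.

Lemma orbit_closed (S : PartSpace R l m) Y s :
  proj1_sig S Y -> proj1_sig S (row_perm s Y).
Proof.
case: S => S [X0 [_ eS]] /=; rewrite eS => -[t ->]; exists (s * t)%g; exact: row_permM.
Qed.

Lemma femb_iso X Y : delta_g (femb X) (femb Y) = delta2 X Y.
Proof.
rewrite /delta_g /delta2; congr inf; apply/seteqP; split.
  move=> r [G [H [s [[A [hA ->]] [[B [hB ->]] ->]]]]].
  exists A => //; exists (row_perm s B); first exact: orbit_closed.
  by rewrite /= permG_Dg block_norm_Dg.
move=> r [A hA [B hB <-]].
exists (gr A), (gr B), 1%g; split; first by exists A.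
split; first by exists B.
rewrite /= permG_Dg block_norm_Dg; congr frob; congr (_ - _).
by apply/matrixP=> i j; rewrite !mxE perm1.
Qed.

End Emb.

Theorem theorem5 (R : realType) (l m : nat) (hl : (1 <= l)%N) (hlm : (l <= m)%N) :
  exists f : PartSpace R l m -> GraphSpace R l m,
    injective f /\
    forall X Y : PartSpace R l m, delta_g (f X) (f Y) = delta2 X Y.
Proof.
exists (@femb R l m); split; [exact: femb_inj | exact: femb_iso].
Qed.
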